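(* Let $n\ge 5$, let $M$ be a matching of the complete graph $K_n$, and let $G=K_n\setminus M$ be the graph obtained from $K_n$ by deleting the edges of $M$. If $M$ is a perfect matching, then $\gamma_3(G)=4$; otherwise $\gamma_3(G)=3$.
   Context: In a graph $G=(V,E)$, a vertex dominates itself and its neighbours. A set $S\subseteq V$ is a three dominating set of $G$ if every vertex in $V\setminus S$ is dominated by at least three vertices of $S$ (equivalently, every vertex of $V\setminus S$ has at least three neighbours in $S$). The three domination number $\gamma_3(G)$ is the minimum cardinality of a three dominating set of $G$. *)

(* Defs.v *)
From mathcomp Require Import all_boot all_order.
Set Implicit Arguments. Unset Strict Implicit. Unset Printing Implicit Defensive.

(* A simple graph on a finite vertex type T is given by an adjacency relation e
   (assumed symmetric and irreflexive where needed). *)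

Definition nbhd (T : finType) (e : rel T) (v : T) : {set T} := [set u | e v u].

Definition three_dominating (T : finType) (e : rel T) (S : {set T}) : bool :=
  [forall v, (v \notin S) ==> (3 <= #|nbhd e v :&: S|)].

(* three domination number: minimum cardinality of a three dominating set
   (the full vertex set is always three dominating, so #|T| is a valid bound). *)
Definition gamma3 (T : finType) (e : rel T) : nat :=
  \big[minn/#|T|]_(S : {set T} | three_dominating e S) #|S|.

Definition is_matching (n : nat) (M : rel 'I_n) : Prop :=
  (forall x y, M x y -> x != y) /\
  (forall x y, M x y = M y x) /\
  (forall x y z, M x y -> M x z -> y = z).

Definition perfect_matching (n : nat) (M : rel 'I_n) : Prop :=
  forall x, exists y, M x y.

Definition Kn_minus (n : nat) (M : rel 'I_n) : rel 'I_n :=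
  fun x y => (x != y) && ~~ M x y.

(* Main.v *)
Require Import Defs.
From mathcomp Require Import all_boot all_order.
From mathcomp Require Import zify.

Lemma gamma3_le (T : finType) (e : rel T) S :
  three_dominating e S -> gamma3 e <= #|S|.
Proof.
move=> HS; rewrite /gamma3.
have : S \in index_enum {set T} by rewrite mem_index_enum.
elim: (index_enum _) => [//|X r IH]; rewrite inE big_cons.
case/orP => [/eqP <-|/IH H]; first by rewrite HS geq_minl.
by case: ifP => _ //; apply: leq_trans H; apply: geq_minr.
Qed.

Lemma gamma3_ge (T : finType) (e : rel T) k :
  k <= #|T| -> (forall S, three_dominating e S -> k <= #|S|) -> k <= gamma3 e.
Proof.
move=> Hk H; rewrite /gamma3; apply: (big_ind (fun m => k <= m)) => //.
  by move=> x y Hx Hy; rewrite leq_min Hx Hy.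
Qed.

Section M.
Variables (n : nat) (M : rel 'I_n).
Hypothesis n5 : 5 <= n.
Hypothesis HM : is_matching M.

Lemma td_ge3 S : three_dominating (Kn_minus M) S -> 3 <= #|S|.
Proof.
move=> /forallP H.
case: (boolP (S == setT)) => [/eqP ->|].
  by rewrite cardsT card_ord; apply: leq_trans n5.
rewrite -properT => /properP [_ [v _ Hv]].
have := implyP (H v) Hv => H3.
apply: leq_trans H3 _; apply: subset_leq_card; exact: subsetIr.
Qed.

Lemma closed_td (S : {set 'I_n}) : 3 <= #|S| -> (forall s v, s \in S -> M s v -> v \in S) ->
  three_dominating (Kn_minus M) S.
Proof.
move=> H3 Hc; apply/forallP => v; apply/implyP => Hv.
suff -> : nbhd (Kn_minus M) v :&: S = S by [].
apply/setP => s; rewrite !inE; case: (boolP (s \in S)) => Hs; rewrite ?andbT ?andbF //.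
rewrite /Kn_minus; apply/andP; split.
  by apply/eqP => E; subst; rewrite Hs in Hv.
apply/negP => Hvs; case: HM => _ [Hsym _].
by rewrite Hsym in Hvs; rewrite (Hc _ _ Hs Hvs) in Hv.
Qed.

End M.

Theorem theorem2p7 (n : nat) (M : rel 'I_n) :
  5 <= n -> is_matching M ->
  (perfect_matching M -> gamma3 (Kn_minus M) = 4) /\
  (~ perfect_matching M -> gamma3 (Kn_minus M) = 3).
Proof.
move=> n5 HM; have HM' := HM; case: HM' => [Hirr [Hsym Hfun]].
have Tn : #|'I_n| = n by rewrite card_ord.
split.
- move=> Hp.
  have n0 : 0 < n by apply: leq_trans n5.
  pose a := Ordinal n0.
  have [b Hab] := Hp a.
  have : 0 < #|~: [set a; b]|.
    have := cardsC [set a; b]; rewrite Tn cards2 => E.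
    have : (a != b).+1 <= 2 by case: (a != b).
    lia.
  case/card_gt0P => c; rewrite !inE negb_or => /andP [Hca Hcb].
  have [d Hcd] := Hp c.
  have Hda : d != a.
    apply/eqP => E; subst d; rewrite Hsym in Hcd.
    by rewrite (Hfun _ _ _ Hcd Hab) eqxx in Hcb.
  have Hdb : d != b.
    apply/eqP => E; subst d; rewrite Hsym in Hcd; rewrite Hsym in Hab.
    by rewrite (Hfun _ _ _ Hcd Hab) eqxx in Hca.
  have Hab' := Hirr _ _ Hab; have Hcd' := Hirr _ _ Hcd.
  pose S := [set x in [:: a; b; c; d]].
  have cS : #|S| = 4.
    rewrite cardsE; apply/card_uniqP.
    by rewrite /= !inE !negb_or Hab' Hcd' (eq_sym a c) (eq_sym a d) (eq_sym b c) (eq_sym b d) Hca Hcb Hda Hdb.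
  apply/eqP; rewrite eqn_leq; apply/andP; split.
    rewrite -cS; apply: gamma3_le; apply: closed_td => //; first by rewrite cS.
    move=> s v; rewrite !inE => /or4P [] /eqP -> Hv.
    + by rewrite (Hfun _ _ _ Hv Hab) eqxx orbT.
    + rewrite Hsym in Hab; by rewrite (Hfun _ _ _ Hv Hab) eqxx.
    + by rewrite (Hfun _ _ _ Hv Hcd) eqxx !orbT.
    + rewrite Hsym in Hcd; by rewrite (Hfun _ _ _ Hv Hcd) eqxx !orbT.
  apply: gamma3_ge; first by rewrite Tn; apply: ltnW.
  move=> S0 HS0; have H3 := @td_ge3 n M n5 _ HS0.
  rewrite ltn_neqAle H3 andbT; apply/eqP => E.
  suff /existsP [s /existsP [p /and3P [Hs Hp' Hsp]]] : [exists s, exists p, [&& s \in S0, p \notin S0 & M s p]].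
    move: HS0 => /forallP /(_ p) /implyP /(_ Hp') H.
    have : #|nbhd (Kn_minus M) p :&: S0| <= #|S0 :\ s|.
      apply: subset_leq_card; apply/subsetP => x; rewrite !inE /Kn_minus.
      case/andP => /andP [_ Hx] ->; rewrite andbT; apply/eqP => Ex; subst x.
      by rewrite Hsym Hsp in Hx.
    move=> H2; have := cardsD1 s S0; rewrite Hs -E => E2; lia.
  have : 0 < #|S0| by rewrite -E.
  case/card_gt0P => x xS.
  have : #|S0 :\ x| == 2 by have := cardsD1 x S0; rewrite xS -E => E2; apply/eqP; lia.
  case/cards2P => y [z [Hyz ES]].
  have yS : y \in S0 :\ x by rewrite ES !inE eqxx.
  have zS : z \in S0 :\ x by rewrite ES !inE eqxx orbT.
  have Hxy : x != y by move: yS; rewrite !inE eq_sym => /andP [].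
  have Hxz : x != z by move: zS; rewrite !inE eq_sym => /andP [].
  have mem : forall w, (w \in S0) = [|| w == x, w == y | w == z].
    move=> w; case: (boolP (w == x)) => [/eqP -> //|wx] /=.
    have : (w \in S0 :\ x) = (w \in S0) by rewrite !inE wx.
    by move <-; rewrite ES !inE.
  apply: contraT => /negP Hno.
  have cl : forall s p, s \in S0 -> M s p -> p \in S0.
    move=> s p Hs Hsp; apply: contraT => Hp'; exfalso; apply: Hno.
    by apply/existsP; exists s; apply/existsP; exists p; rewrite Hs Hp' Hsp.
  have xin : x \in S0 by rewrite mem eqxx.
  have yin : y \in S0 by rewrite mem eqxx orbT.
  have zin : z \in S0 by rewrite mem eqxx !orbT.
  have [px Hpx] := Hp x; have [pz Hpz] := Hp z; have [py Hpy] := Hp y.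
  have F : forall u v w, M u v -> M u w -> v = w by move=> u v w; apply: Hfun.
  have G : forall u v w, M v u -> M w u -> v = w.
    by move=> u v w; rewrite (Hsym v) (Hsym w); apply: Hfun.
  have nx := Hirr _ _ Hpx; have ny := Hirr _ _ Hpy; have nz := Hirr _ _ Hpz.
  move: (cl _ _ xin Hpx); rewrite mem => /or3P [] /eqP Ex; subst px.
  + by rewrite eqxx in nx.
  + move: (cl _ _ zin Hpz); rewrite mem => /or3P [] /eqP Ez; subst pz.
    * by rewrite Hsym in Hpz; rewrite (F _ _ _ Hpz Hpx) eqxx in Hyz.
    * by rewrite (G _ _ _ Hpz Hpx) eqxx in Hxz.
    * by rewrite eqxx in nz.
  + move: (cl _ _ yin Hpy); rewrite mem => /or3P [] /eqP Ey; subst py.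
    * by rewrite Hsym in Hpy; rewrite (F _ _ _ Hpy Hpx) eqxx in Hyz.
    * by rewrite eqxx in ny.
    * by rewrite (G _ _ _ Hpy Hpx) eqxx in Hxy.
- move=> Hnp.
  have up : forall l : seq 'I_n, uniq l -> size l = 3 ->
      (forall s v, s \in l -> M s v -> v \in l) -> gamma3 (Kn_minus M) = 3.
    move=> l ul sl cl; have cS : #|[set x in l]| = 3.
      by rewrite cardsE; move/card_uniqP: ul => ->.
    apply/eqP; rewrite eqn_leq; apply/andP; split.
      rewrite -cS; apply: gamma3_le; apply: (@closed_td n M HM); first by rewrite cS.
      by move=> s v; rewrite !inE; apply: cl.
    apply: gamma3_ge; first by rewrite Tn; apply: leq_trans n5.
    by move=> S0 HS0; apply: (@td_ge3 n M n5).
  case: (boolP [exists x, [forall y, ~~ M x y]]); last first.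
    move=> /negP Hne; exfalso; apply: Hnp => x.
    case: (boolP [exists y, M x y]) => [/existsP //|Hy].
    exfalso; apply: Hne; apply/existsP; exists x; apply/forallP => y.
    by apply/negP => Hxy; move/negP: Hy; apply; apply/existsP; exists y.
  case/existsP => x /forallP Hx.
  case: (boolP [exists a, exists b, M a b]).
    case/existsP => a /existsP [b Hab].
    have Hxa : x != a.
      by apply/eqP => E; subst; move: (Hx b); rewrite Hab.
    have Hxb : x != b.
      by apply/eqP => E; subst; move: (Hx a); rewrite Hsym Hab.
    apply: (up [:: x; a; b]) => //.
      by rewrite /= !inE negb_or Hxa Hxb (Hirr _ _ Hab).
    move=> s v; rewrite !inE => /or3P [] /eqP -> Hv.
    + by move: (Hx v); rewrite Hv.
    + by rewrite (Hfun _ _ _ Hv Hab) eqxx !orbT.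
    + by rewrite Hsym in Hab; rewrite (Hfun _ _ _ Hv Hab) eqxx !orbT.
  move=> Hne.
  have h0 : 0 < n by apply: leq_trans n5.
  have h1 : 1 < n by apply: leq_trans n5.
  have h2 : 2 < n by apply: leq_trans n5.
  apply: (up [:: Ordinal h0; Ordinal h1; Ordinal h2]) => //.
  move=> s v _ Hsv; exfalso; move/negP: Hne; apply.
  by apply/existsP; exists s; apply/existsP; exists v.
Qed.
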